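(* Let $L\in\{0,1\}$, $X$, $T^{k-1}$ and $T_k$ be jointly distributed discrete random variables with finite supports such that, for every value $t^{k-1}$ of $T^{k-1}$ with positive probability, conditioned on $T^{k-1}=t^{k-1}$ and $L=0$ the message $T_k$ is independent of $X$. Assume $\Pr(L=0\mid X=x,T^{k-1}=t^{k-1})>0$ whenever $\Pr(X=x,T^{k-1}=t^{k-1})>0$. Writing $T^k=(T^{k-1},T_k)$, \[ I(X;T_k\mid T^{k-1})\le \mathrm{susp}(X,T^k)-\mathrm{susp}(X,T^{k-1}). \]
   Context: All logarithms are base $2$. For a random variable $Y$ (possibly a tuple of random variables) jointly distributed with $L\in\{0,1\}$ and a value $y$ with $\Pr(Y=y)>0$, the suspicion given $Y=y$ is $\mathrm{susp}(Y=y)=-\log\Pr(L=0\mid Y=y)\in[0,\infty]$, and the suspicion given $Y$ is $\mathrm{susp}(Y)=\sum_{y}\Pr(Y=y)\,\mathrm{susp}(Y=y)$. Here $T^{k-1}$ plays the role of a previous transcript and $T_k$ of the next message, sent by a player whose leaking indicator is $L$. $I(X;T_k\mid T^{k-1})$ is conditional mutual information. *)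

(* Defs.v *)
From mathcomp Require Import all_boot.
From Stdlib Require Import Reals.

Set Implicit Arguments.
Unset Strict Implicit.
Unset Printing Implicit Defensive.

Local Open Scope R_scope.

Definition log2 (x : R) : R := ln x / ln 2.

(* Extended nonnegative-valued reals for suspicion (which lies in [0, oo]). *)
Inductive ER : Type := Fin (r : R) | PInf.

Definition ER_plus (a b : ER) : ER :=
  match a, b with Fin x, Fin y => Fin (x + y) | _, _ => PInf end.

(* a - b; only used with b finite (b = PInf gives a junk value). *)
Definition ER_sub (a b : ER) : ER :=
  match a, b with
  | Fin x, Fin y => Fin (x - y)
  | PInf, Fin _ => PInf
  | _, PInf => Fin 0
  end.

Definition ER_le (a b : ER) : Prop :=
  match a, b with
  | Fin x, Fin y => x <= y
  | _, PInf => True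
  | PInf, Fin _ => False
  end.

Definition ER_scale (c : R) (a : ER) : ER :=
  match a with Fin x => Fin (c * x) | PInf => PInf end.

Section Prob.
(* Sample space: values of (L, X, T^{k-1}, T_k), with L = 0 encoded as false. *)
Variables (X T M : finType).
Definition Omega := (bool * X * T * M)%type.

Definition rvL (w : Omega) : bool := w.1.1.1.
Definition rvX (w : Omega) : X := w.1.1.2.
Definition rvT (w : Omega) : T := w.1.2.
Definition rvM (w : Omega) : M := w.2.

Definition is_pmf (p : Omega -> R) : Prop :=
  (forall w, 0 <= p w) /\ \big[Rplus/0]_(w : Omega) p w = 1.

Definition Pr (p : Omega -> R) (E : pred Omega) : R :=
  \big[Rplus/0]_(w : Omega | E w) p w.

Definition cPr (p : Omega -> R) (A B : pred Omega) : R :=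
  Pr p (fun w => A w && B w) / Pr p B.

Definition PrL0given (p : Omega -> R) (Y : finType) (f : Omega -> Y) (y : Y) : R :=
  cPr p (fun w => ~~ rvL w) (fun w => f w == y).

Definition susp_at (p : Omega -> R) (Y : finType) (f : Omega -> Y) (y : Y) : ER :=
  if Rlt_dec 0 (PrL0given p f y) then Fin (- log2 (PrL0given p f y)) else PInf.

Definition susp (p : Omega -> R) (Y : finType) (f : Omega -> Y) : ER :=
  \big[ER_plus/Fin 0]_(y : Y)
     (if Rlt_dec 0 (Pr p (fun w => f w == y))
      then ER_scale (Pr p (fun w => f w == y)) (susp_at p f y)
      else Fin 0).

Definition cond_mutual_info (p : Omega -> R) : R :=
  \big[Rplus/0]_(v : (X * T * M)%type)
    let: (x, t, m) := v in
    let pxtm := Pr p (fun w => (rvX w == x) && (rvT w == t) && (rvM w == m)) in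
    let pt   := Pr p (fun w => rvT w == t) in
    let pxt  := Pr p (fun w => (rvX w == x) && (rvT w == t)) in
    let ptm  := Pr p (fun w => (rvT w == t) && (rvM w == m)) in
    if Rlt_dec 0 pxtm then pxtm * log2 (pxtm * pt / (pxt * ptm)) else 0.

End Prob.

(* Main.v *)
From HB Require Import structures.
Require Import Defs.
From mathcomp Require Import all_boot.
From Stdlib Require Import Reals Lra Classical.
Local Open Scope R_scope.
Set Warnings "-notation-overridden,-redundant-canonical-projection".

Lemma Rplus_assoc' : associative Rplus. Proof. by move=> *; rewrite Rplus_assoc. Qed.
HB.instance Definition _ := Monoid.isComLaw.Build R 0 Rplus Rplus_assoc' Rplus_comm Rplus_0_l.

Lemma sum_pred1 (I:finType) (i:I) (F : I -> R) : \big[Rplus/0]_(j | pred1 i j) F j = F i.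
Proof. exact: big_pred1_eq. Qed.

Lemma big_boolR (F : bool -> R) : \big[Rplus/0]_b F b = F true + F false.
Proof. exact: big_bool. Qed.

Lemma ln2_pos : 0 < ln 2. Proof. have := ln_lt_2; lra. Qed.

Lemma ln_divR x y : 0 < x -> 0 < y -> ln (x / y) = ln x - ln y.
Proof. move=> hx hy; have hy' := Rinv_0_lt_compat _ hy; rewrite /Rdiv ln_mult // ln_Rinv //. Qed.

Lemma ln_le_m1 y : 0 < y -> 1 + ln y <= y.
Proof. move=> hy; have := exp_ineq1_le (ln y); by rewrite exp_ln. Qed.

Lemma term_ineq (q q0 Pxt Pxt0 Ptm Ptm0 Pt Pt0 : R) :
 0<q -> 0<q0 -> 0<Pxt -> 0<Pxt0 -> 0<Ptm -> 0<Ptm0 -> 0<Pt -> 0<Pt0 ->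
 q0*Pt0 = Pxt0*Ptm0 ->
 q*log2(q*Pt/(Pxt*Ptm)) + q*(-log2(Pxt0/Pxt)) + (q - q*(Ptm0*Pt/(Pt0*Ptm)))/ln 2
   <= q*(-log2(q0/q)).
Proof.
move=> h1 h2 h3 h4 h5 h6 h7 h8 hi.
have hy : 0 < Ptm0*Pt/(Pt0*Ptm) by apply: Rdiv_lt_0_compat; apply: Rmult_lt_0_compat.
have Hy := ln_le_m1 _ hy.
have Hly : ln (Ptm0*Pt/(Pt0*Ptm)) = ln Ptm0 + ln Pt - (ln Pt0 + ln Ptm).
  rewrite ln_divR; [rewrite !ln_mult // | nra | nra].
rewrite Hly in Hy.
have Hi : ln q0 + ln Pt0 = ln Pxt0 + ln Ptm0 by rewrite -!ln_mult // hi.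
have E1 : ln (q * Pt / (Pxt * Ptm)) = ln q + ln Pt - (ln Pxt + ln Ptm).
  rewrite ln_divR; [rewrite !ln_mult // | nra | nra].
rewrite /log2 E1 !ln_divR //.
have L := ln2_pos.
set y := Ptm0 * Pt / (Pt0 * Ptm) in Hy *.
have -> : q * ((ln q + ln Pt - (ln Pxt + ln Ptm)) / ln 2) + q * - ((ln Pxt0 - ln Pxt) / ln 2) +
   (q - q * y) / ln 2 =
   q * (- ((ln q0 - ln q) / ln 2)) - q * (y - 1 - (ln Ptm0 + ln Pt - (ln Pt0 + ln Ptm))) / ln 2.
  rewrite -[ln Pxt0](Rplus_minus_r _ (ln Ptm0)) -Hi. field; lra.
have : 0 <= q * (y - 1 - (ln Ptm0 + ln Pt - (ln Pt0 + ln Ptm))) / ln 2.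
  rewrite /Rdiv; apply: Rmult_le_pos; [apply: Rmult_le_pos; lra | apply: Rlt_le; apply: Rinv_0_lt_compat; lra].
lra.
Qed.

Lemma sum_ge0 {I : finType} (F : I -> R) : (forall i, 0 <= F i) -> 0 <= \big[Rplus/0]_i F i.
Proof. move=> h; apply: (big_ind (fun x => 0 <= x)) => //; [lra | move=> *; lra]. Qed.

Lemma sum_le {I : finType} (F G : I -> R) : (forall i, F i <= G i) ->
  \big[Rplus/0]_i F i <= \big[Rplus/0]_i G i.
Proof. move=> h; apply: (big_ind2 (fun x y => x <= y)) => //; [lra | move=> *; lra]. Qed.

Lemma term_le_sum {I : finType} (F : I -> R) i : (forall j, 0 <= F j) -> F i <= \big[Rplus/0]_j F j.
Proof.
move=> h; rewrite (bigD1 i) //=.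
have : 0 <= \big[Rplus/0]_(j | j != i) F j.
  apply: (big_ind (fun x => 0 <= x)) => //; [lra | move=> *; lra].
lra.
Qed.

Lemma sum_mulr {I : finType} (c : R) (F : I -> R) :
  \big[Rplus/0]_i (c * F i) = c * \big[Rplus/0]_i F i.
Proof.
apply: (big_rec2 (fun x y => x = c * y)); first by rewrite Rmult_0_r.
by move=> i y1 y2 _ ->; rewrite Rmult_plus_distr_l.
Qed.

Section S.
Variables (X T M : finType) (p : Omega X T M -> R).

Lemma Pr_ext (E E' : pred (Omega X T M)) : (forall w, E w = E' w) -> Pr p E = Pr p E'.
Proof. by move=> h; apply: eq_bigl. Qed.

Lemma Pr_prod (a : pred bool) (b : pred X) (c : pred T) (d : pred M) :
  Pr p (fun w => a (rvL w) && b (rvX w) && c (rvT w) && d (rvM w)) =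
  \big[Rplus/0]_(l | a l) \big[Rplus/0]_(x | b x) \big[Rplus/0]_(t | c t)
     \big[Rplus/0]_(m | d m) p (l, x, t, m).
Proof.
rewrite pair_big_dep /= pair_big_dep /= pair_big_dep /=.
by apply: eq_big => [[[[l x] t] m]|[[[l x] t] m]] //.
Qed.
Definition q x t m := p (true, x, t, m) + p (false, x, t, m).
Definition q0 x t m := p (false, x, t, m).
Definition Pxt x t := \big[Rplus/0]_m q x t m.
Definition Pxt0 x t := \big[Rplus/0]_m q0 x t m.
Definition Ptm t m := \big[Rplus/0]_x q x t m.
Definition Ptm0 t m := \big[Rplus/0]_x q0 x t m.
Definition Pt t := \big[Rplus/0]_x \big[Rplus/0]_m q x t m.
Definition Pt0 t := \big[Rplus/0]_x \big[Rplus/0]_m q0 x t m.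

Ltac evsimpl := move=> [[[[] ?] ?] ?];
  rewrite /rvX /rvT /rvM /rvL /= ?xpair_eqE; try done; do ! case: (_ == _) => //.

Lemma Pr_xtm x t m : Pr p (fun w => (rvX w, (rvT w, rvM w)) == (x, (t, m))) = q x t m.
Proof.
rewrite (@Pr_ext _ (fun w => xpredT (rvL w) && pred1 x (rvX w) && pred1 t (rvT w) && pred1 m (rvM w))); last evsimpl.
by rewrite (Pr_prod xpredT (pred1 x) (pred1 t) (pred1 m)) big_boolR !sum_pred1.
Qed.
Ltac prc a b c d := rewrite (@Pr_ext _ (fun w => a (rvL w) && b (rvX w) && c (rvT w) && d (rvM w))); [rewrite (Pr_prod a b c d) | evsimpl].

Lemma Pr_xtm0 x t m : Pr p (fun w => ~~ rvL w && ((rvX w, (rvT w, rvM w)) == (x, (t, m)))) = q0 x t m.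
Proof. by prc (pred1 false) (pred1 x) (pred1 t) (pred1 m); rewrite !sum_pred1. Qed.

Lemma Pr_xt x t : Pr p (fun w => (rvX w, rvT w) == (x, t)) = Pxt x t.
Proof. by prc (fun _ : bool => true) (pred1 x) (pred1 t) (fun _ : M => true); rewrite big_boolR !sum_pred1 -big_split. Qed.

Lemma Pr_xt0 x t : Pr p (fun w => ~~ rvL w && ((rvX w, rvT w) == (x, t))) = Pxt0 x t.
Proof. by prc (pred1 false) (pred1 x) (pred1 t) (fun _ : M => true); rewrite !sum_pred1. Qed.

Lemma Pr_xtm' x t m : Pr p (fun w => (rvX w == x) && (rvT w == t) && (rvM w == m)) = q x t m.
Proof. by prc (fun _ : bool => true) (pred1 x) (pred1 t) (pred1 m); rewrite big_boolR !sum_pred1. Qed.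

Lemma Pr_t t : Pr p (fun w => rvT w == t) = Pt t.
Proof.
prc (fun _ : bool => true) (fun _ : X => true) (pred1 t) (fun _ : M => true); rewrite big_boolR.
under eq_bigr do rewrite sum_pred1.
under [Z in _ + Z]eq_bigr do rewrite sum_pred1.
rewrite -big_split; apply: eq_bigr => x _; by rewrite -big_split.
Qed.

Lemma Pr_xt' x t : Pr p (fun w => (rvX w == x) && (rvT w == t)) = Pxt x t.
Proof. by prc (fun _ : bool => true) (pred1 x) (pred1 t) (fun _ : M => true); rewrite big_boolR !sum_pred1 -big_split. Qed.

Lemma Pr_tm t m : Pr p (fun w => (rvT w == t) && (rvM w == m)) = Ptm t m.
Proof.
prc (fun _ : bool => true) (fun _ : X => true) (pred1 t) (pred1 m); rewrite big_boolR.
under eq_bigr do rewrite !sum_pred1.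
under [Z in _ + Z]eq_bigr do rewrite !sum_pred1.
by rewrite -big_split.
Qed.

Lemma Pr_h1 x t m : Pr p (fun w => (rvX w == x) && (rvM w == m) && ((rvT w == t) && ~~ rvL w)) = q0 x t m.
Proof. by prc (pred1 false) (pred1 x) (pred1 t) (pred1 m); rewrite !sum_pred1. Qed.

Lemma Pr_h2 t : Pr p (fun w => (rvT w == t) && ~~ rvL w) = Pt0 t.
Proof.
prc (pred1 false) (fun _ : X => true) (pred1 t) (fun _ : M => true); rewrite sum_pred1.
by under eq_bigr do rewrite sum_pred1.
Qed.

Lemma Pr_h3 x t : Pr p (fun w => (rvX w == x) && ((rvT w == t) && ~~ rvL w)) = Pxt0 x t.
Proof. by prc (pred1 false) (pred1 x) (pred1 t) (fun _ : M => true); rewrite !sum_pred1. Qed.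

Lemma Pr_h4 t m : Pr p (fun w => (rvM w == m) && ((rvT w == t) && ~~ rvL w)) = Ptm0 t m.
Proof.
prc (pred1 false) (fun _ : X => true) (pred1 t) (pred1 m); rewrite sum_pred1.
by under eq_bigr do rewrite !sum_pred1.
Qed.

Definition S3 (F : X -> T -> M -> R) :=
  \big[Rplus/0]_x \big[Rplus/0]_t \big[Rplus/0]_m F x t m.

Lemma S3_split F G : S3 (fun x t m => F x t m + G x t m) = S3 F + S3 G.
Proof.
rewrite /S3 -big_split; apply: eq_bigr => x _; rewrite -big_split.
apply: eq_bigr => t _; by rewrite -big_split.
Qed.

Lemma S3_le F G : (forall x t m, F x t m <= G x t m) -> S3 F <= S3 G.
Proof. move=> h; do 3 (apply: sum_le => ?); exact: h. Qed.

Lemma S3_swap F : S3 F = \big[Rplus/0]_t \big[Rplus/0]_m \big[Rplus/0]_x F x t m.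
Proof. rewrite /S3 exchange_big; apply: eq_bigr => t _; exact: exchange_big. Qed.

Hypothesis Hp : is_pmf p.

Lemma p_ge0 w : 0 <= p w. Proof. exact: Hp.1. Qed.
Lemma q_ge0 x t m : 0 <= q x t m. Proof. rewrite /q; have := p_ge0 (true,x,t,m); have := p_ge0 (false,x,t,m); lra. Qed.
Lemma q0_ge0 x t m : 0 <= q0 x t m. Proof. exact: p_ge0. Qed.
Lemma q0_le_q x t m : q0 x t m <= q x t m. Proof. rewrite /q /q0; have := p_ge0 (true,x,t,m); lra. Qed.
Lemma q_le_Pxt x t m : q x t m <= Pxt x t. Proof. rewrite /Pxt. exact: (term_le_sum (fun m => q x t m) m (q_ge0 x t)). Qed.
Lemma q0_le_Pxt0 x t m : q0 x t m <= Pxt0 x t. Proof. rewrite /Pxt0; exact: (term_le_sum (fun m => q0 x t m) m (q0_ge0 x t)). Qed.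
Lemma q_le_Ptm x t m : q x t m <= Ptm t m. Proof. rewrite /Ptm; exact: (term_le_sum (fun x => q x t m) x (fun x => q_ge0 x t m)). Qed.
Lemma q0_le_Ptm0 x t m : q0 x t m <= Ptm0 t m. Proof. rewrite /Ptm0; exact: (term_le_sum (fun x => q0 x t m) x (fun x => q0_ge0 x t m)). Qed.
Lemma Pxt_ge0 x t : 0 <= Pxt x t. Proof. apply: sum_ge0 => m; exact: q_ge0. Qed.
Lemma Pxt0_ge0 x t : 0 <= Pxt0 x t. Proof. apply: sum_ge0 => m; exact: q0_ge0. Qed.
Lemma Ptm_ge0 t m : 0 <= Ptm t m. Proof. apply: sum_ge0 => x; exact: q_ge0. Qed.
Lemma Ptm0_ge0 t m : 0 <= Ptm0 t m. Proof. apply: sum_ge0 => x; exact: q0_ge0. Qed.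
Lemma Pt_ge0 t : 0 <= Pt t. Proof. apply: sum_ge0 => x; exact: Pxt_ge0. Qed.
Lemma Pt0_ge0 t : 0 <= Pt0 t. Proof. apply: sum_ge0 => x; exact: Pxt0_ge0. Qed.
Lemma q_le_Pt x t m : q x t m <= Pt t.
Proof. have := q_le_Pxt x t m; have := term_le_sum (fun x => Pxt x t) x (fun x => Pxt_ge0 x t). rewrite /Pt /Pxt; lra. Qed.
Lemma q0_le_Pt0 x t m : q0 x t m <= Pt0 t.
Proof. have := q0_le_Pxt0 x t m; have := term_le_sum (fun x => Pxt0 x t) x (fun x => Pxt0_ge0 x t). rewrite /Pt0 /Pxt0; lra. Qed.

Lemma S3_q : S3 q = 1.
Proof.
have := Pr_prod (fun _ : bool => true) (fun _ : X => true) (fun _ : T => true) (fun _ : M => true).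
rewrite /Pr /= big_boolR => E.
change (S3 (fun x t m => p (true,x,t,m) + p (false,x,t,m)) = 1).
rewrite S3_split; rewrite /S3 -E; exact: Hp.2.
Qed.

Lemma sum_Pt : \big[Rplus/0]_t Pt t = 1.
Proof. rewrite -S3_q /S3 /Pt exchange_big; done. Qed.

Lemma sum_Ptm0 t : \big[Rplus/0]_m Ptm0 t m = Pt0 t.
Proof. by rewrite /Ptm0 /Pt0 exchange_big. Qed.

Lemma S3_mulr c F : S3 (fun x t m => c * F x t m) = c * S3 F.
Proof.
rewrite /S3 -sum_mulr; apply: eq_bigr => x _; rewrite -sum_mulr.
apply: eq_bigr => t _; by rewrite -sum_mulr.
Qed.

Lemma q_eq0 {x t m} : ~ 0 < q x t m -> q x t m = 0.
Proof. have := q_ge0 x t m; lra. Qed.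

Definition gg x t m := if Rlt_dec 0 (q x t m) then q x t m * (- log2 (q0 x t m / q x t m)) else 0.
Definition hh x t := if Rlt_dec 0 (Pxt x t) then Pxt x t * (- log2 (Pxt0 x t / Pxt x t)) else 0.
Definition cc x t m := if Rlt_dec 0 (q x t m) then
   q x t m * log2 (q x t m * Pt t / (Pxt x t * Ptm t m)) else 0.

Lemma main_real
  (Hpos' : forall x t m, 0 < q x t m -> 0 < q0 x t m)
  (Hind' : forall x t m, 0 < q0 x t m -> q0 x t m * Pt0 t = Pxt0 x t * Ptm0 t m) :
  S3 cc <= S3 gg - \big[Rplus/0]_x \big[Rplus/0]_t hh x t.
Proof.
pose K t m := Ptm0 t m * Pt t / (Pt0 t * Ptm t m).
pose h' x t m := if Rlt_dec 0 (q x t m) then q x t m * (- log2 (Pxt0 x t / Pxt x t)) else 0.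
pose s x t m := if Rlt_dec 0 (q x t m) then (q x t m - q x t m * K t m) / ln 2 else 0.
pose r x t m := if Rlt_dec 0 (q x t m) then q x t m * K t m else 0.
have step1 : \big[Rplus/0]_x \big[Rplus/0]_t hh x t = S3 h'.
  rewrite /S3; apply: eq_bigr => x _; apply: eq_bigr => t _; rewrite /hh.
  case: Rlt_dec => H /=.
    rewrite Rmult_comm /Pxt -sum_mulr; apply: eq_bigr => m _; rewrite /h'.
    case: Rlt_dec => Hq /=; first by rewrite Rmult_comm.
    by rewrite (q_eq0 Hq) Rmult_0_r.
  rewrite big1 // => m _; rewrite /h'; case: Rlt_dec => // Hq /=.
  have := q_le_Pxt x t m; have := Pxt_ge0 x t; lra.
have step2 : forall x t m, cc x t m + h' x t m + s x t m <= gg x t m.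
  move=> x t m; rewrite /cc /h' /s /gg; case: Rlt_dec => Hq /=; last lra.
  have H0 := Hpos' _ _ _ Hq.
  have := q_le_Pxt x t m; have := q0_le_Pxt0 x t m; have := q_le_Ptm x t m;
  have := q0_le_Ptm0 x t m; have := q_le_Pt x t m; have := q0_le_Pt0 x t m => *.
  apply: term_ineq; try lra; exact: Hind'.
have step3 : S3 r <= 1.
  apply: (Rle_trans _ (S3 (fun x t m => q x t m * K t m))).
    apply: S3_le => x t m; rewrite /r; case: Rlt_dec => Hq /=; first lra.
    rewrite (q_eq0 Hq); lra.
  rewrite S3_swap -sum_Pt; apply: sum_le => t.
  apply: (Rle_trans _ (\big[Rplus/0]_m (Ptm0 t m * (Pt t * / Pt0 t)))).
    apply: sum_le => m.
    have -> : \big[Rplus/0]_x (q x t m * K t m) = Ptm t m * K t m.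
      rewrite /Ptm Rmult_comm -sum_mulr; apply: eq_bigr => x _; exact: Rmult_comm.
    rewrite /K /Rdiv Rinv_mult.
    have := Ptm_ge0 t m; have := Ptm0_ge0 t m; have := Pt_ge0 t; have := Pt0_ge0 t => *.
    have hi : 0 <= / Pt0 t.
      case: (Req_dec (Pt0 t) 0) => [->|?]; first by rewrite Rinv_0; lra.
      apply: Rlt_le; apply: Rinv_0_lt_compat; lra.
    case: (Req_dec (Ptm t m) 0) => [->|Hm]; first by (rewrite Rmult_0_l; apply: Rmult_le_pos => //; apply: Rmult_le_pos).
    have -> : Ptm t m * (Ptm0 t m * Pt t * (/ Pt0 t * / Ptm t m)) = Ptm0 t m * (Pt t * / Pt0 t).
      case: (Req_dec (Pt0 t) 0) => [E0|Ht]; first by rewrite E0 Rinv_0; ring.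
      by field.
    lra.
  rewrite [X in X <= _](_ : _ = (\big[Rplus/0]_m Ptm0 t m) * (Pt t * / Pt0 t)); last first.
    rewrite [RHS]Rmult_comm -(sum_mulr (Pt t * / Pt0 t)); apply: eq_bigr => m _; exact: Rmult_comm.
  rewrite sum_Ptm0.
  case: (Req_dec (Pt0 t) 0) => [->|?]; first by rewrite Rinv_0 !Rmult_0_r; exact: Pt_ge0.
  have -> : Pt0 t * (Pt t * / Pt0 t) = Pt t by field.
  lra.
have step4 : 0 <= S3 s.
  have -> : S3 s = / ln 2 * S3 (fun x t m => q x t m - r x t m).
    rewrite -S3_mulr /S3; apply: eq_bigr => x _; apply: eq_bigr => t _; apply: eq_bigr => m _.
    rewrite /s /r; case: Rlt_dec => Hq /=; first by rewrite /Rdiv Rmult_comm.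
    rewrite (q_eq0 Hq); lra.
  have E : S3 q = S3 (fun x t m => q x t m - r x t m) + S3 r.
    rewrite -S3_split /S3; apply: eq_bigr => x _; apply: eq_bigr => t _; apply: eq_bigr => m _; lra.
  rewrite S3_q in E.
  apply: Rmult_le_pos; last lra.
  apply: Rlt_le; apply: Rinv_0_lt_compat; exact: ln2_pos.
have := S3_le _ _ step2; rewrite !S3_split step1; lra.
Qed.
End S.

Lemma ER_sum_fin {I : finType} (F : I -> ER) (G : I -> R) :
  (forall i, F i = Fin (G i)) -> \big[ER_plus/Fin 0]_i F i = Fin (\big[Rplus/0]_i G i).
Proof.
move=> h; rewrite (@big_morph _ _ Fin (Fin 0) ER_plus 0 Rplus) //.
by apply: eq_bigr => i _; rewrite h.
Qed.

Lemma ER_sum_inf {I : finType} (F : I -> ER) i0 :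
  F i0 = PInf -> \big[ER_plus/Fin 0]_i F i = PInf.
Proof.
move=> h; rewrite unlock /=.
have : i0 \in index_enum I by rewrite mem_index_enum.
elim: (index_enum I) => //= a r IH; rewrite in_cons => /orP [/eqP <-|/IH ->].
  by rewrite h.
by case: (F a).
Qed.

Lemma sum_pair {I J : finType} (F : I * J -> R) :
  \big[Rplus/0]_(y : I * J) F y = \big[Rplus/0]_i \big[Rplus/0]_j F (i, j).
Proof. by rewrite pair_big; apply: eq_bigr => [[]]. Qed.

Theorem corollary3p2 (X T M : finType) (p : Omega X T M -> R)
  (Hp : is_pmf p)
  (Hindep : forall t : T,
     0 < Pr p (fun w => rvT w == t) ->
     forall (x : X) (m : M),
       cPr p (fun w => (rvX w == x) && (rvM w == m))
             (fun w => (rvT w == t) && ~~ rvL w)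
       = cPr p (fun w => rvX w == x) (fun w => (rvT w == t) && ~~ rvL w)
         * cPr p (fun w => rvM w == m) (fun w => (rvT w == t) && ~~ rvL w))
  (Hpos : forall (x : X) (t : T),
     0 < Pr p (fun w => (rvX w == x) && (rvT w == t)) ->
     0 < PrL0given p (fun w => (rvX w, rvT w)) (x, t)) :
  ER_le (Fin (cond_mutual_info p))
        (ER_sub (susp p (fun w => (rvX w, (rvT w, rvM w))))
                (susp p (fun w => (rvX w, rvT w)))).
Proof.
have HposR : forall x t, 0 < Pxt X T M p x t -> 0 < Pxt0 X T M p x t / Pxt X T M p x t.
  move=> x t H; have := Hpos x t; rewrite Pr_xt' /PrL0given /cPr /= Pr_xt0 Pr_xt; by apply.
have EXT : susp p (fun w => (rvX w, rvT w)) =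
    Fin (\big[Rplus/0]_x \big[Rplus/0]_t hh X T M p x t).
  rewrite /susp (ER_sum_fin _ (fun y => hh X T M p y.1 y.2)); last first.
    move=> [x t] /=; rewrite Pr_xt /susp_at /PrL0given /cPr /= Pr_xt0 Pr_xt /hh.
    case: Rlt_dec => H /=; last by [].
    case: Rlt_dec => H2 /=; first by [].
    by have := HposR _ _ H.
  by rewrite pair_big.
rewrite EXT.
case: (classic (exists x t m, 0 < q X T M p x t m /\ ~ 0 < q0 X T M p x t m)) =>
  [[x [t [m [H1 H2]]]] | Hn].
  rewrite /susp (ER_sum_inf _ (x, (t, m))) //=.
  rewrite Pr_xtm; case: Rlt_dec => //= _.
  rewrite /susp_at /PrL0given /cPr /= Pr_xtm0 Pr_xtm; case: Rlt_dec => //= H3.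
  have := q0_ge0 X T M p Hp x t m => H4.
  have E : q0 X T M p x t m = 0 by lra.
  rewrite E /Rdiv Rmult_0_l in H3; lra.
have Hpos' : forall x t m, 0 < q X T M p x t m -> 0 < q0 X T M p x t m.
  move=> x t m H; apply: NNPP => H'; apply: Hn; by exists x, t, m.
have Hind' : forall x t m, 0 < q0 X T M p x t m ->
    q0 X T M p x t m * Pt0 X T M p t = Pxt0 X T M p x t * Ptm0 X T M p t m.
  move=> x t m H.
  have Ht : 0 < Pt X T M p t by have := q0_le_q X T M p Hp x t m; have := q_le_Pt X T M p Hp x t m; lra.
  have Ht0 : 0 < Pt0 X T M p t by have := q0_le_Pt0 X T M p Hp x t m; lra.
  have := Hindep t; rewrite Pr_t => /(_ Ht x m).
  rewrite /cPr Pr_h1 Pr_h2 Pr_h3 Pr_h4 => E.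
  have E2 : q0 X T M p x t m = Pt0 X T M p t * (Pxt0 X T M p x t / Pt0 X T M p t * (Ptm0 X T M p t m / Pt0 X T M p t)).
    rewrite -E; field; lra.
  rewrite E2; field; lra.
have EXTM : susp p (fun w => (rvX w, (rvT w, rvM w))) = Fin (S3 X T M (gg X T M p)).
  rewrite /susp (ER_sum_fin _ (fun y => gg X T M p y.1 y.2.1 y.2.2)); last first.
    move=> [x [t m]] /=; rewrite Pr_xtm /susp_at /PrL0given /cPr /= Pr_xtm0 Pr_xtm /gg.
    case: Rlt_dec => H /=; last by [].
    case: Rlt_dec => H2 /=; first by [].
    exfalso; apply: H2; apply: Rdiv_lt_0_compat => //; exact: Hpos'.
  rewrite sum_pair /S3; congr Fin; apply: eq_bigr => x _; by rewrite sum_pair.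
have ECMI : cond_mutual_info p = S3 X T M (cc X T M p).
  rewrite /cond_mutual_info sum_pair sum_pair /S3; apply: eq_bigr => x _; apply: eq_bigr => t _.
  apply: eq_bigr => m _ /=.
  by rewrite Pr_xtm' Pr_t Pr_xt' Pr_tm.
rewrite EXTM ECMI /=.
exact: main_real.
Qed.
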